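(* Let $\mathcal H$ be a well-structured preconditioner set, $\epsilon>0$, $\beta\in(0,1]$, $\eta>0$, $T\in\mathbb N$, and $f:\mathbb R^d\to\mathbb R$ twice continuously differentiable with $\Lambda_{\mathcal H}(f)<\infty$. Let $f_0,\dots,f_{T-1}$ be random differentiable functions and $\Sigma\in\mathcal S_+^d$ such that for all $t,x$, almost surely $-\Sigma\preceq\nabla f(x)\nabla f(x)^\top-\nabla f_t(x)\nabla f_t(x)^\top\preceq\Sigma$. For any fixed $x_0$, let $g_t,V_t$ be generated by the weighted adaptive algorithm. Then with probability $1$, $$\sum_{t=0}^{T-1}\|g_t\|_2^2\le2\big(\|\Sigma\|_{\mathrm{op}}+\|\nabla f(x_0)\|_2^2+\Lambda_{\mathcal H}(f)^2d\eta^2\big)T^3,$$ $$\|V_{T-1}\|_{\mathrm{op}}\le\sqrt{2\big(\|\Sigma\|_{\mathrm{op}}+\|\nabla f(x_0)\|_2^2+\Lambda_{\mathcal H}(f)^2d\eta^2\big)T^3+\epsilon d}.$$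
   Context: $\mathcal S^d_+$ (resp. $\mathcal S^d_{++}$) denotes the set of real symmetric positive semidefinite (resp. positive definite) $d\times d$ matrices; $\langle A,B\rangle=\operatorname{Tr}(A^\top B)$. A set $\mathcal H\subseteq\mathcal S_+^d$ is a well-structured preconditioner set if $\mathcal H=\mathcal S_+^d\cap\mathcal K$ for some set $\mathcal K$ of real $d\times d$ matrices that is closed under scalar multiplication, matrix addition and matrix multiplication and contains the identity $I_d$. For $M\in\mathcal S^d_{++}$, $P_{\mathcal H}(M):=\arg\min_{H\in\mathcal H\cap\mathcal S^d_{++}}\langle M,H^{-1}\rangle+\operatorname{Tr}(H)$ (the minimizer exists and is unique). The adaptive smoothness is $\Lambda_{\mathcal H}(f):=\inf\{\operatorname{Tr}(H): H\in\mathcal H,\ -H\preceq\nabla^2 f(x)\preceq H\ \text{for all }x\}$. Weighted adaptive algorithm: given $x_0\in\mathbb R^d$, set $M_{-1}=0$ and for $t=0,\dots,T-1$: $g_t=\nabla f_t(x_t)$, $M_t=\beta M_{t-1}+g_tg_t^\top$, $V_t=P_{\mathcal H}(M_t+\epsilon I_d)$, $x_{t+1}=x_t-\eta V_t^{-1}g_t$. $\|\cdot\|_{\mathrm{op}}$ is the spectral norm. *)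

(* Defs.v *)
From HB Require Import structures.
From mathcomp Require Import all_boot all_order all_algebra.
From mathcomp Require Import all_classical all_reals all_analysis.
Set Implicit Arguments. Unset Strict Implicit. Unset Printing Implicit Defensive.
Import Order.TTheory GRing.Theory Num.Theory.
Import numFieldNormedType.Exports.
Local Open Scope classical_set_scope.
Local Open Scope ring_scope.

Section Defs.
Variables (R : realType) (d : nat).

Definition ei (i : 'I_d) : 'cV[R]_d := delta_mx i 0.

Definition norm2sq (v : 'cV[R]_d) : R := \sum_i (v i 0) ^+ 2.

Definition grad (f : 'cV[R]_d -> R) (x : 'cV[R]_d) : 'cV[R]_d :=
  \col_i derive f x (ei i).

Definition hess (f : 'cV[R]_d -> R) (x : 'cV[R]_d) : 'M[R]_d :=
  \matrix_(i, j) derive (fun y => derive f y (ei i)) x (ei j).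

Definition C2 (f : 'cV[R]_d -> R) : Prop :=
  (forall x, differentiable f x) /\
  (forall i x, differentiable (fun y => derive f y (ei i)) x) /\
  (forall x, {for x, continuous (hess f)}).

Definition psd (A : 'M[R]_d) : Prop :=
  A^T = A /\ forall v : 'cV[R]_d, 0 <= (v^T *m A *m v) 0 0.

Definition pd (A : 'M[R]_d) : Prop :=
  A^T = A /\ forall v : 'cV[R]_d, v != 0 -> 0 < (v^T *m A *m v) 0 0.

Definition loewner (A B : 'M[R]_d) : Prop := psd (B - A).

Definition opnorm (A : 'M[R]_d) : R :=
  sup [set Num.sqrt (norm2sq (A *m v)) | v in [set v | norm2sq v = 1]].

Definition well_structured_K (K : set 'M[R]_d) : Prop :=
  (forall (a : R) A, K A -> K (a *: A)) /\
  (forall A B, K A -> K B -> K (A + B)) /\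
  (forall A B, K A -> K B -> K (A *m B)) /\
  K 1%:M.

Definition Hset (K : set 'M[R]_d) : set 'M[R]_d := [set H | psd H /\ K H].

Definition precond_obj (M H : 'M[R]_d) : R := \tr (M^T *m invmx H) + \tr H.

Definition is_PH (K : set 'M[R]_d) (M V : 'M[R]_d) : Prop :=
  Hset K V /\ pd V /\
  forall H, Hset K H -> pd H -> precond_obj M V <= precond_obj M H.

Definition LamSet (K : set 'M[R]_d) (f : 'cV[R]_d -> R) : set R :=
  [set \tr H | H in [set H | Hset K H /\
      forall x, loewner (- H) (hess f x) /\ loewner (hess f x) H]].

(* Λ_H(f) (meaningful when LamSet is nonempty, i.e. Λ_H(f) < ∞) *)
Definition Lambda (K : set 'M[R]_d) (f : 'cV[R]_d -> R) : R := inf (LamSet K f).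

Definition weighted_adaptive (K : set 'M[R]_d) (eps beta eta : R) (T : nat)
  (ft : nat -> 'cV[R]_d -> R) (x0 : 'cV[R]_d)
  (x g : nat -> 'cV[R]_d) (M V : nat -> 'M[R]_d) : Prop :=
  x 0%N = x0 /\
  forall t : nat, (t < T)%N ->
    [/\ g t = grad (ft t) (x t),
        M t = (if t is t'.+1 then beta *: M t' else 0) + g t *m (g t)^T,
        is_PH K (M t + eps%:M) (V t) &
        x t.+1 = x t - eta *: (invmx (V t) *m g t)].

End Defs.

(* Main.v *)
Require Import Defs.
From HB Require Import structures.
From mathcomp Require Import all_boot all_order all_algebra.
From mathcomp Require Import all_classical all_reals all_analysis.
From mathcomp Require Import ring lra.
Import Order.TTheory GRing.Theory Num.Theory.
Import numFieldNormedType.Exports.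
Local Open Scope classical_set_scope.
Local Open Scope ring_scope.
Set Implicit Arguments. Unset Strict Implicit. Unset Printing Implicit Defensive.

Section Aux.
Variables (R : realType) (d : nat).
Implicit Types (u v w : 'cV[R]_d) (A B H X Z : 'M[R]_d).

Definition qf u A v : R := (u^T *m A *m v) 0 0.

Lemma qf_tr u A v : qf u A^T v = qf v A u.
Proof.
rewrite /qf -[v^T *m A *m u]trmxK [RHS]mxE !trmx_mul !trmxK mulmxA.
by [].
Qed.

Lemma qfMl u A B v : qf u (A *m B) v = qf (A^T *m u) B v.
Proof. by rewrite /qf trmx_mul trmxK !mulmxA. Qed.

Lemma qfMr u A B v : qf u (A *m B) v = qf u A (B *m v).
Proof. by rewrite /qf !mulmxA. Qed.

Lemma qfDm u A B v : qf u (A + B) v = qf u A v + qf u B v.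
Proof. by rewrite /qf mulmxDr mulmxDl mxE. Qed.
Lemma qfNm u A v : qf u (- A) v = - qf u A v.
Proof. by rewrite /qf mulmxN mulNmx mxE. Qed.
Lemma qfBm u A B v : qf u (A - B) v = qf u A v - qf u B v.
Proof. by rewrite qfDm qfNm. Qed.
Lemma qfZm u a A v : qf u (a *: A) v = a * qf u A v.
Proof. by rewrite /qf -scalemxAr -scalemxAl mxE. Qed.
Lemma qfDl u1 u2 A v : qf (u1 + u2) A v = qf u1 A v + qf u2 A v.
Proof. by rewrite /qf linearD /= !mulmxDl mxE. Qed.
Lemma qfDr u A v1 v2 : qf u A (v1 + v2) = qf u A v1 + qf u A v2.
Proof. by rewrite /qf mulmxDr mxE. Qed.
Lemma qfZl a u A v : qf (a *: u) A v = a * qf u A v.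
Proof. by rewrite /qf linearZ /= -!scalemxAl mxE. Qed.
Lemma qfZr a u A v : qf u A (a *: v) = a * qf u A v.
Proof. by rewrite /qf -scalemxAr mxE. Qed.
Lemma qfNl u A v : qf (- u) A v = - qf u A v.
Proof. by rewrite -scaleN1r qfZl mulN1r. Qed.
Lemma qfNr u A v : qf u A (- v) = - qf u A v.
Proof. by rewrite -scaleN1r qfZr mulN1r. Qed.

Lemma qf_delta i A j : qf (ei R i) A (ei R j) = A i j.
Proof.
rewrite /qf /ei trmx_delta -rowE -colE !mxE. done.
Qed.

Lemma qfE u A v : qf u A v = \sum_i \sum_j u i 0 * A i j * v j 0.
Proof.
rewrite /qf mxE; under eq_bigr do rewrite mxE big_distrl /=.
rewrite exchange_big /=; apply: eq_bigr => i _; apply: eq_bigr => j _.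
by rewrite !mxE.
Qed.

Lemma norm2sqE v : norm2sq v = qf v 1%:M v.
Proof.
rewrite qfE /norm2sq; apply: eq_bigr => i _.
rewrite (bigD1 i) //= big1 ?addr0; first by rewrite mxE eqxx mulr1 expr2.
by move=> j /negPf ji; rewrite mxE eq_sym ji mulr0 mul0r.
Qed.

Lemma norm2sq_ge0 v : 0 <= norm2sq v.
Proof. by apply: sumr_ge0 => i _; rewrite sqr_ge0. Qed.

Lemma qf_TM u A : qf u (A^T *m A) u = norm2sq (A *m u).
Proof. by rewrite norm2sqE qfMr qf_tr -[X in qf _ X u]mul1mx qfMr. Qed.

Lemma tr_qf Z : \tr Z = \sum_i qf (ei R i) Z (ei R i).
Proof. by rewrite /mxtrace; apply: eq_bigr => i _; rewrite qf_delta. Qed.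

Lemma tr_outer (g : 'cV[R]_d) Z : \tr (g *m g^T *m Z) = qf g Z g.
Proof.
rewrite -mulmxA mxtrace_mulC /qf /mxtrace big_ord1.
by [].
Qed.


Lemma psd_qf A v : psd A -> 0 <= qf v A v.
Proof. by case=> _ /(_ v). Qed.

Lemma psd_sym A i j : psd A -> A i j = A j i.
Proof. by case=> hs _; rewrite -[in LHS]hs mxE. Qed.

Lemma psd_le_tr H u : psd H -> qf u H u <= \tr H * norm2sq u.
Proof.
move=> hH.
have key i j : 2 * (u i 0 * H i j * u j 0) <= u j 0 ^+ 2 * H i i + u i 0 ^+ 2 * H j j.
  have := psd_qf (u j 0 *: ei R i - u i 0 *: ei R j) hH.
  rewrite !(qfDl, qfDr, qfNl, qfNr, qfZl, qfZr, qf_delta) (psd_sym j i hH).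
  move=> h; nra.
have e1 : \sum_i \sum_j (u j 0 ^+ 2 * H i i) = \tr H * norm2sq u.
  rewrite mulr_suml; apply: eq_bigr => i _; rewrite mulr_sumr.
  by apply: eq_bigr => j _; rewrite mulrC.
have e2 : \sum_i \sum_j (u i 0 ^+ 2 * H j j) = \tr H * norm2sq u.
  by rewrite mulrC mulr_suml; apply: eq_bigr => i _; rewrite mulr_sumr.
have -> : \tr H * norm2sq u = (\sum_i \sum_j (u j 0 ^+ 2 * H i i + u i 0 ^+ 2 * H j j)) / 2.
  rewrite (eq_bigr (fun i => \sum_j (u j 0 ^+ 2 * H i i) + \sum_j (u i 0 ^+ 2 * H j j))); last first.
    by move=> i _; rewrite big_split.
  by rewrite big_split /= e1 e2; field.
rewrite qfE ler_pdivlMr // mulrC mulr_sumr; apply: ler_sum => i _.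
rewrite mulr_sumr; apply: ler_sum => j _; exact: key.
Qed.

Definition dot u w : R := (u^T *m w) 0 0.

Lemma dotC u w : dot u w = dot w u.
Proof. by rewrite /dot -[u^T *m w]trmxK [LHS]mxE trmx_mul trmxK. Qed.

Lemma dot_qf u w : dot u w = qf u 1%:M w.
Proof. by rewrite /qf mulmx1. Qed.

Lemma qf_outer u a b v : qf u (a *m b^T) v = dot u a * dot b v.
Proof.
by rewrite /qf /dot mulmxA -(mulmxA _ b^T) mxE big_ord1.
Qed.

Lemma norm2sq_dot u : norm2sq u = dot u u.
Proof. by rewrite dot_qf norm2sqE. Qed.

Lemma psd_outer w : psd (w *m w^T).
Proof.
split; first by rewrite trmx_mul trmxK.
by move=> v; rewrite -/(qf v _ v) qf_outer dotC -expr2 sqr_ge0.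
Qed.

Lemma tr_outer1 w : \tr (w *m w^T) = norm2sq w.
Proof. by rewrite mxtrace_mulC /mxtrace big_ord1 norm2sq_dot. Qed.

Lemma cauchy_schwarz u w : dot u w ^+ 2 <= norm2sq u * norm2sq w.
Proof.
have := psd_le_tr u (psd_outer w).
by rewrite qf_outer tr_outer1 (dotC w u) -expr2 mulrC.
Qed.

Definition PT A := forall Z, (forall u, 0 <= qf u Z u) -> 0 <= \tr (A *m Z).

Lemma PT0 : PT 0.
Proof. by move=> Z _; rewrite mul0mx mxtrace0. Qed.

Lemma PTD A B : PT A -> PT B -> PT (A + B).
Proof. by move=> hA hB Z hZ; rewrite mulmxDl mxtraceD addr_ge0 ?hA ?hB. Qed.

Lemma PTZ a A : 0 <= a -> PT A -> PT (a *: A).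
Proof. by move=> ha hA Z hZ; rewrite -scalemxAl mxtraceZ mulr_ge0 ?hA. Qed.

Lemma PT_outer (g : 'cV[R]_d) : PT (g *m g^T).
Proof. by move=> Z hZ; rewrite tr_outer. Qed.

Lemma PT1 : PT 1%:M.
Proof. by move=> Z hZ; rewrite mul1mx tr_qf sumr_ge0. Qed.

Lemma PT_tr A : PT A -> PT A^T.
Proof.
move=> hA Z hZ; rewrite -mxtrace_tr trmx_mul trmxK mxtrace_mulC.
by apply: hA => u; rewrite qf_tr.
Qed.

Lemma qf_inv N P : N *m P = 1%:M -> (forall y, 0 <= qf y N y) -> forall w, 0 <= qf w P w.
Proof.
move=> NP hN w.
have -> : qf w P w = qf (N *m (P *m w)) P w by rewrite mulmxA NP mul1mx.
have -> : qf (N *m (P *m w)) P w = qf (P *m w) (N^T *m P) w by rewrite qfMl trmxK.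
by rewrite qfMr qf_tr.
Qed.

Lemma pd_unit X : pd X -> X \in unitmx.
Proof.
move=> [_ hX]; case: (boolP (X \in unitmx)) => // nu; exfalso.
have /det0P [v v0 vX] : \det X == 0.
  by move: nu; rewrite unitmxE unitfE negbK.
have := hX v^T; rewrite trmx_eq0 => /(_ v0).
by rewrite trmxK vX mul0mx mxE ltxx.
Qed.

Lemma inv_comm X V : X \in unitmx -> X *m V = V *m X -> invmx X *m V = V *m invmx X.
Proof.
move=> uX XV.
by rewrite -[invmx X *m V]mulmx1 -(mulmxV uX) !mulmxA -(mulmxA _ V) -XV mulmxA mulVmx // mul1mx.
Qed.

Lemma pd_psd X : pd X -> psd X.
Proof.
case=> hs hX; split => // v; case: (eqVneq v 0) => [->|/hX /ltW //].
by rewrite mulmx0 mxE.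
Qed.

Lemma lim_le (x y c : R) : (forall s, 0 < s -> x <= y + s * c) -> x <= y.
Proof.
move=> h; rewrite leNgt; apply/negP => lt.
have c1 : 0 < `|c| + 1 by rewrite ltr_wpDl.
set s := (x - y) / (`|c| + 1).
have s0 : 0 < s by rewrite /s divr_gt0 // subr_gt0.
have es : s * `|c| + s = x - y by rewrite /s -[X in _ + X]mulr1 -mulrDr divfK ?gt_eqF.
have hc : s * c <= s * `|c| by apply: ler_wpM2l; [exact: ltW | exact: ler_norm].
have := h s s0; lra.
Qed.

Lemma qf3 u A Y C w : qf u (A *m Y *m C) w = qf (A^T *m u) Y (C *m w).
Proof. by rewrite qfMr qfMl. Qed.

Lemma opt_le K A V X : is_PH K A V -> psd X -> K X -> pd X ->
  precond_obj A V <= precond_obj A X.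
Proof. by case=> _ [_ h] pX KX pdX; apply: h. Qed.

Lemma opt1 K A V : well_structured_K K -> is_PH K A V -> PT A^T ->
  \tr (A^T *m (invmx V *m invmx V)) <= d%:R.
Proof.
move=> [KZ [KD [KM K1]]] hPH hA.
have [[_ KV] [pdV _]] := hPH.
have uV := pd_unit pdV; have [Vs pV] := pdV.
set B := invmx V.
have Bs : B^T = B by rewrite /B trmx_inv Vs.
have VB : V *m B = 1%:M := mulmxV uV.
have BV : B *m V = 1%:M := mulVmx uV.
set ta := fun M => \tr (A^T *m M).
have taB (M1 M2 : 'M[R]_d) : ta (M1 - M2) = ta M1 - ta M2 by rewrite /ta mulmxBr raddfB.
have taZ a (M1 : 'M[R]_d) : ta (a *: M1) = a * ta M1 by rewrite /ta -scalemxAr mxtraceZ.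
apply: (@lim_le _ _ (ta (B *m (B *m B)))) => s s0.
set X := V + s%:M.
have KX : K X by rewrite /X -scalemx1; apply: KD => //; apply: KZ.
have Xs : X^T = X by rewrite /X linearD /= Vs tr_scalar_mx.
have qX u : qf u X u = qf u V u + s * norm2sq u by rewrite /X qfDm -scalemx1 qfZm norm2sqE.
have pdX : pd X.
  split=> // u u0; change (0 < qf u X u); rewrite qX.
  have h2 : 0 < qf u V u := pV u u0.
  have h3 : 0 <= s * norm2sq u by apply: mulr_ge0; [exact: ltW | exact: norm2sq_ge0].
  lra.
have uX := pd_unit pdX.
set Xi := invmx X.
have XiX : Xi *m X = 1%:M := mulVmx uX.
have XXi : X *m Xi = 1%:M := mulmxV uX.
have key (Y : 'M[R]_d) : Xi *m Y = B *m Y - s *: (Xi *m (B *m Y)).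
  have e : Xi *m V = 1%:M - s *: Xi by rewrite -XiX /X mulmxDr mul_mx_scalar addrK.
  rewrite -{1}[Y]mul1mx -VB !mulmxA e !mulmxBl !mul1mx -!scalemxAl. 
  by [].
have e1 : ta Xi = ta B - s * ta (Xi *m B).
  by have := key 1%:M; rewrite !mulmx1 => ee; rewrite {1}ee taB taZ.
have e2 : ta (Xi *m B) = ta (B *m B) - s * ta (Xi *m (B *m B)).
  by rewrite key taB taZ.
have e3 : ta (Xi *m (B *m B)) = ta (B *m (B *m B)) - s * ta (Xi *m (B *m (B *m B))).
  by rewrite key taB taZ.
have XV : X *m V = V *m X by rewrite /X mulmxDl mulmxDr mul_mx_scalar mul_scalar_mx.
have XiV := inv_comm uX XV.
have XiB : Xi *m B = B *m Xi.
  rewrite -[B *m Xi]mulmx1 -VB !mulmxA -(mulmxA B Xi V) XiV.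
  by rewrite !mulmxA BV mul1mx.
have r0 : 0 <= ta (Xi *m (B *m (B *m B))).
  apply: hA => u.
  have -> : Xi *m (B *m (B *m B)) = B *m (Xi *m B) *m B.
    by rewrite !mulmxA XiB.
  rewrite qf3 Bs; apply: (@qf_inv (V *m X)).
    by rewrite !mulmxA -(mulmxA V X Xi) XXi mulmx1 VB.
  move=> y; rewrite /X mulmxDr mul_mx_scalar qfDm qfZm.
  have -> : qf y (V *m V) y = norm2sq (V *m y) by rewrite -qf_TM Vs.
  apply: addr_ge0; first exact: norm2sq_ge0.
  by apply: mulr_ge0; [exact: ltW | exact: psd_qf (pd_psd pdV)].
have := opt_le hPH (pd_psd pdX) KX pdX.
rewrite /precond_obj -/Xi -/B -/(ta Xi) -/(ta B).
rewrite /X mxtraceD mxtrace_scalar -mulr_natr e1 e2 e3 => h.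
have hh : 0 <= s ^+ 3 * ta (Xi *m (B *m (B *m B))) by rewrite mulr_ge0 // exprn_ge0 // ltW.
rewrite -[s *+ d]mulr_natr in h.
have h' : 0 <= s * (d%:R - ta (B *m B) + s * ta (B *m (B *m B))) by nra.
rewrite pmulr_rge0 // in h'; rewrite /ta in h'; lra.
Qed.

Lemma opt2 K A V : well_structured_K K -> is_PH K A V -> PT A^T ->
  \tr (V *m V) <= \tr A^T.
Proof.
move=> [KZ [KD [KM K1]]] hPH hA.
have [[_ KV] [pdV _]] := hPH.
have uV := pd_unit pdV; have [Vs pV] := pdV.
have psV := pd_psd pdV.
set B := invmx V.
have VB : V *m B = 1%:M := mulmxV uV.
set ta := fun M => \tr (A^T *m M).
have taD (M1 M2 : 'M[R]_d) : ta (M1 + M2) = ta M1 + ta M2 by rewrite /ta mulmxDr mxtraceD.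
have taZ a (M1 : 'M[R]_d) : ta (a *: M1) = a * ta M1 by rewrite /ta -scalemxAr mxtraceZ.
apply: (@lim_le _ _ (\tr (V *m (V *m V)))) => s s0.
set X := V + (- s) *: (V *m V) + s ^+ 2 *: (V *m (V *m V)).
have KX : K X by exact: KD _ _ (KD _ _ KV (KZ _ _ (KM _ _ KV KV))) (KZ _ _ (KM _ _ KV (KM _ _ KV KV))).
have Xs : X^T = X.
  by rewrite /X !linearD !linearZ /= !trmx_mul Vs mulmxA.
set a := s / 2.
have hsq (Y : 'M[R]_d) y : qf (y - a *: (V *m y)) Y (y - a *: (V *m y)) =
    qf y Y y - a * (qf y (Y *m V) y + qf y (V *m Y) y) + a ^+ 2 * qf y (V *m Y *m V) y.
  rewrite !(qfDl, qfDr, qfNl, qfNr, qfZl, qfZr).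
  have -> : qf (V *m y) Y y = qf y (V *m Y) y by rewrite qfMl Vs.
  have -> : qf y Y (V *m y) = qf y (Y *m V) y by rewrite qfMr.
  have -> : qf (V *m y) Y (V *m y) = qf y (V *m Y *m V) y by rewrite qf3 Vs.
  ring.
set J := 1%:M + (- s) *: V + s ^+ 2 *: (V *m V).
have qJ y : 0 <= qf y J y.
  have h := hsq 1%:M y; rewrite !mul1mx !mulmx1 in h.
  have e : qf y J y = qf (y - a *: (V *m y)) 1%:M (y - a *: (V *m y)) + (3/4 * s ^+ 2) * qf y (V *m V) y.
    by rewrite h /J !qfDm !qfZm /a; field.
  rewrite e -norm2sqE; apply: addr_ge0; first exact: norm2sq_ge0.
  apply: mulr_ge0; first by apply: mulr_ge0 => //; apply: sqr_ge0.
  by rewrite (_ : qf y (V *m V) y = norm2sq (V *m y)) ?norm2sq_ge0 // -qf_TM Vs.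
have qX u : qf u X u = qf (u - a *: (V *m u)) V (u - a *: (V *m u)) + (3/4 * s ^+ 2) * qf (V *m u) V (V *m u).
  have e : qf (V *m u) V (V *m u) = qf u (V *m V *m V) u by rewrite qf3 Vs.
  by rewrite hsq e /X !qfDm !qfZm !mulmxA /a; field.
have pdX : pd X.
  split=> // z z0; change (0 < qf z X z); rewrite qX.
  have q1 : 0 <= qf (V *m z) V (V *m z) by apply: psd_qf.
  have s2 : 0 < 3/4 * s ^+ 2 by rewrite mulr_gt0 // exprn_gt0.
  case: (eqVneq (z - a *: (V *m z)) 0) => [w0|w0].
    rewrite w0 /qf mulmx0 mxE add0r; apply: mulr_gt0 => //.
    have Vz0 : V *m z != 0.
      apply: contraNneq z0 => Vz; move/eqP: w0; rewrite Vz scaler0 subr0 => /eqP //.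
    exact: pV.
  have h : 0 < qf (z - a *: (V *m z)) V (z - a *: (V *m z)) := pV _ w0.
  by have := mulr_ge0 (ltW s2) q1; lra.
have uX := pd_unit pdX.
set Xi := invmx X.
have XiX : Xi *m X = 1%:M := mulVmx uX.
have XXi : X *m Xi = 1%:M := mulmxV uX.
have JV : J *m V = X by rewrite /J /X !mulmxDl mul1mx -!scalemxAl !mulmxA.
have XV : X *m V = V *m X.
  by rewrite /X !mulmxDl !mulmxDr -!scalemxAl -!scalemxAr !mulmxA.
have XiV := inv_comm uX XV.
have JG : J *m (Xi *m V) = 1%:M by rewrite XiV mulmxA JV XXi.
have qG := qf_inv JG qJ.
have P : Xi *m V + (- s) *: (Xi *m (V *m V)) + s ^+ 2 *: (Xi *m (V *m (V *m V))) = 1%:M.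
  by rewrite -XiX /X !mulmxDr -!scalemxAr.
have h1 : Xi *m V *m B = Xi by rewrite -mulmxA VB mulmx1.
have h2 : Xi *m (V *m V) *m B = Xi *m V by rewrite -!mulmxA VB mulmx1.
have h3 : Xi *m (V *m (V *m V)) *m B = Xi *m (V *m V) by rewrite -!mulmxA VB mulmx1.
have Q : Xi + (- s) *: (Xi *m V) + s ^+ 2 *: (Xi *m (V *m V)) = B.
  by have := congr1 (mulmx^~ B) P; rewrite /= !mulmxDl -!scalemxAl h1 h2 h3 mul1mx.
have tP := congr1 ta P; rewrite !taD !taZ in tP.
have tQ := congr1 ta Q; rewrite !taD !taZ in tQ.
have r0 : 0 <= ta (Xi *m (V *m (V *m V))).
  apply: hA => u.
  have -> : Xi *m (V *m (V *m V)) = V *m (Xi *m V) *m V by rewrite !mulmxA XiV.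
  by rewrite qf3 Vs.
have := opt_le hPH (pd_psd pdX) KX pdX.
rewrite /precond_obj -/Xi -/B -/(ta Xi) -/(ta B).
rewrite /X !mxtraceD !mxtraceZ => h.
have hh : 0 <= s ^+ 3 * ta (Xi *m (V *m (V *m V))) by rewrite mulr_ge0 // exprn_ge0 // ltW.
have ta1 : ta 1%:M = \tr A^T by rewrite /ta mulmx1.
rewrite ta1 in tP.
have h' : 0 <= s * (\tr A^T - \tr (V *m V) + s * \tr (V *m (V *m V))) by nra.
rewrite pmulr_rge0 // in h'; lra.
Qed.

End Aux.

Section Aux2.
Variables (R : realType) (d : nat).
Local Notation qf := (@qf R d).

Lemma comp_line (p : 'cV[R]_d -> R) (y w : 'cV[R]_d) (t : R) :
  differentiable p (y + t *: w) ->
  is_derive t 1 (fun tau : R => p (y + tau *: w)) (derive p (y + t *: w) w).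
Proof.
move=> dp.
have E : (fun h : R => h^-1 *: (((fun tau : R => p (y + tau *: w)) \o shift t) (h *: 1) - p (y + t *: w)))
  = (fun h : R => h^-1 *: ((p \o shift (y + t *: w)) (h *: w) - p (y + t *: w))).
  apply/funext => h /=; congr (_ *: (p _ - _)).
  by rewrite /shift /= [h%:A]mulr1 scalerDl addrCA.
apply: DeriveDef.
  by rewrite /derivable E; exact: diff_derivable.
by rewrite /derive E.
Qed.

Lemma col_dec (w : 'cV[R]_d) : w = \sum_j w j 0 *: ei R j.
Proof.
rewrite {1}(matrix_sum_delta w); apply: eq_bigr => j _.
by rewrite big_ord1.
Qed.

Lemma deriv_lin (p : 'cV[R]_d -> R) z w : differentiable p z ->
  derive p z w = \sum_j w j 0 * derive p z (ei R j).
Proof.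
move=> dp; rewrite deriveE // {1}(col_dec w) linear_sum.
by apply: eq_bigr => j _; rewrite linearZ deriveE.
Qed.

Lemma grad_mvt (f : 'cV[R]_d -> R) x y (u : 'cV[R]_d) : C2 f ->
  exists z, (u^T *m (grad f x - grad f y)) 0 0 = (u^T *m hess f z *m (x - y)) 0 0.
Proof.
case=> [df [dp _]].
set w := x - y.
pose h (i : 'I_d) := (u i 0) \*: (fun tau : R => derive f (y + tau *: w) (ei R i)).
pose dh (tau : R) (i : 'I_d) := u i 0 *: derive (fun z => derive f z (ei R i)) (y + tau *: w) w.
have hd (tau : R) : is_derive tau (1 : R) (\sum_(i < d) h i) (\sum_i dh tau i).
  apply: is_derive_sum => i; apply: is_deriveZ.
  exact: (comp_line (p := fun z => derive f z (ei R i))).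
have [c _ hc] := @MVT R (\sum_(i < d) h i) (fun tau => \sum_i dh tau i) 0 1 ltr01
  (fun t _ => hd t) (derivable_within_continuous (fun t _ => @ex_derive _ _ _ _ _ _ _ (hd t))).
exists (y + c *: w).
move: hc; rewrite !fct_sumE subr0 mulr1 => hc.
have e1 : (u^T *m (grad f x - grad f y)) 0 0 = \sum_i h i 1 - \sum_i h i 0.
  rewrite mxE -sumrB; apply: eq_bigr => j _.
  rewrite !mxE /h /= scale1r scale0r addr0 /w [y + _]addrC subrK mulrBr.
  by [].
rewrite e1 hc.
change (\sum_i dh c i = qf u (hess f (y + c *: w)) w); rewrite qfE.
apply: eq_bigr => i _; rewrite /dh deriv_lin // /GRing.scale /= mulr_sumr.
by apply: eq_bigr => j _; rewrite !mxE; ring.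
Qed.

Lemma psd_trmx (A : 'M[R]_d) : psd A -> A^T = A.
Proof. by case. Qed.

Lemma bilin_bound (S H : 'M[R]_d) (u w : 'cV[R]_d) (b c : R) :
  psd (S - - H) -> psd (H - S) ->
  2 * (b * c) * qf u S w <= b ^+ 2 * qf u H u + c ^+ 2 * qf w H w.
Proof.
move=> l1 l2.
have Ss : S^T = S.
  apply/matrixP => i j; rewrite mxE.
  have := psd_sym i j l1; have := psd_sym i j l2; rewrite !mxE; lra.
have Hs : H^T = H.
  apply/matrixP => i j; rewrite mxE.
  have := psd_sym i j l1; have := psd_sym i j l2; rewrite !mxE; lra.
have sS : qf w S u = qf u S w by rewrite -qf_tr Ss.
have sH : qf w H u = qf u H w by rewrite -qf_tr Hs.
have h1 := psd_qf (b *: u - c *: w) l1.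
have h2 := psd_qf (b *: u + c *: w) l2.
move: h1 h2; rewrite !(qfDl, qfDr, qfNl, qfNr, qfZl, qfZr, qfBm, qfNm) sS sH.
move=> h1 h2; nra.
Qed.

Lemma tr_psd_ge0 (H : 'M[R]_d) : psd H -> 0 <= \tr H.
Proof. by move=> hH; rewrite tr_qf; apply: sumr_ge0 => i _; apply: psd_qf. Qed.

Lemma grad_lip (K : set 'M[R]_d) f (H : 'M[R]_d) x y : C2 f -> Hset K H ->
  (forall z, loewner (- H) (hess f z) /\ loewner (hess f z) H) ->
  norm2sq (grad f x - grad f y) <= (\tr H) ^+ 2 * norm2sq (x - y).
Proof.
move=> hC [pH _] hb.
set u := grad f x - grad f y; set w := x - y.
have [z hz] := grad_mvt x y u hC.
have [l1 l2] := hb z.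
have hN : norm2sq u = qf u (hess f z) w by rewrite norm2sq_dot /dot hz.
have hbl := bilin_bound u w 1 (\tr H) l1 l2.
rewrite -hN expr1n mul1r in hbl.
have hU := psd_le_tr u pH.
have hW := psd_le_tr w pH.
have h0 := tr_psd_ge0 pH.
have n0 := norm2sq_ge0 u.
have w0 := norm2sq_ge0 w.
set h := \tr H in hbl hU hW h0 *.
have key : h * norm2sq u <= h * (h ^+ 2 * norm2sq w).
  have : h ^+ 2 * qf w H w <= h ^+ 2 * (h * norm2sq w) by rewrite ler_wpM2l // sqr_ge0.
  move: hbl hU; rewrite !expr2; nra.
case: (eqVneq h 0) => [h00|hn0].
  have hb1 := bilin_bound u w 1 1 l1 l2.
  rewrite -hN in hb1.
  move: hb1 hU hW; rewrite h00 !mul0r expr1n !mul1r mulr1 => hb1 hU hW.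
  by rewrite expr0n /= mul0r; lra.
have hp : 0 < h by rewrite lt_def hn0 h0.
by rewrite -(ler_pM2l hp).
Qed.

Lemma LamSet_ge0 (K : set 'M[R]_d) f l : LamSet K f l -> 0 <= l.
Proof. by case=> H [[pH _] _] <-; exact: tr_psd_ge0. Qed.

Lemma Lambda_ge0 (K : set 'M[R]_d) f : (exists l, LamSet K f l) -> 0 <= Lambda K f.
Proof.
move=> [l hl]; apply: lb_le_inf; first by exists l.
by move=> m /LamSet_ge0.
Qed.

Lemma grad_lip_Lambda (K : set 'M[R]_d) f x y : C2 f -> (exists l, LamSet K f l) ->
  norm2sq (grad f x - grad f y) <= Lambda K f ^+ 2 * norm2sq (x - y).
Proof.
move=> hC hne.
set N := norm2sq _; set W := norm2sq _.
have hl l : LamSet K f l -> N <= l ^+ 2 * W.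
  by case=> H [HH hb] <-; exact: grad_lip HH hb.
have N0 : 0 <= N := norm2sq_ge0 _.
have W0 : 0 <= W := norm2sq_ge0 _.
have L0 := Lambda_ge0 hne.
case: hne => l0 hl0.
case: (eqVneq W 0) => [W00|Wn0].
  by have := hl l0 hl0; rewrite W00 !mulr0.
have Wp : 0 < W by rewrite lt_def Wn0 W0.
have sWp : 0 < Num.sqrt W by rewrite sqrtr_gt0.
have hs l : LamSet K f l -> Num.sqrt N / Num.sqrt W <= l.
  move=> hl'; rewrite ler_pdivrMr //.
  have := hl l hl'; rewrite -(ler_sqrt _ (mulr_ge0 (sqr_ge0 l) W0)) sqrtrM ?sqr_ge0 //.
  by rewrite sqrtr_sqr ger0_norm // (LamSet_ge0 hl').
have hi : Num.sqrt N / Num.sqrt W <= Lambda K f.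
  by apply: lb_le_inf; [exists l0 | move=> m hm; exact: hs].
rewrite ler_pdivrMr // in hi.
rewrite -(sqr_sqrtr N0) -(sqr_sqrtr W0) -exprMn.
by rewrite lerXn2r // ?nnegrE ?sqrtr_ge0 // mulr_ge0 ?sqrtr_ge0.
Qed.

Lemma norm2sqZ (a : R) (v : 'cV[R]_d) : norm2sq (a *: v) = a ^+ 2 * norm2sq v.
Proof. by rewrite !norm2sqE qfZl qfZr mulrA -expr2. Qed.

Lemma norm2sq_add (p q : R) (a b : 'cV[R]_d) : 0 < p -> 0 < q ->
  p * q * norm2sq (a + b) <= q * (p + q) * norm2sq a + p * (p + q) * norm2sq b.
Proof.
move=> p0 q0; rewrite /norm2sq !mulr_sumr -big_split /=; apply: ler_sum => i _.
rewrite mxE; have := sqr_ge0 (q * a i 0 - p * b i 0); nra.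
Qed.

Lemma elem_bound (A : 'M[R]_d) v : norm2sq v = 1 -> norm2sq (A *m v) <= \tr (A^T *m A).
Proof.
move=> v1; have hp : psd (A^T *m A).
  split; first by rewrite trmx_mul trmxK.
  by move=> u; change (0 <= qf u (A^T *m A) u); rewrite qf_TM norm2sq_ge0.
by have := psd_le_tr v hp; rewrite qf_TM v1 mulr1.
Qed.

End Aux2.

Section Aux3.
Variables (R : realType) (d : nat).
Local Notation qf := (@qf R d).
Implicit Types (u v w g : 'cV[R]_d).
Lemma opnorm_ub (A : 'M[R]_d) :
  has_ubound [set Num.sqrt (norm2sq (A *m v)) | v in [set v | norm2sq v = 1]].
Proof.
exists (Num.sqrt (\tr (A^T *m A))) => _ [v /= v1 <-].
by rewrite ler_sqrt ?elem_bound // (le_trans (norm2sq_ge0 (A *m v))) ?elem_bound.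
Qed.

Lemma opnorm_ge0 (A : 'M[R]_d) : 0 <= opnorm A.
Proof.
rewrite /opnorm.
set S := [set _ | _ in _].
have [[y Sy]|S0] := pselect (exists y, S y).
  apply: le_trans (ub_le_sup (opnorm_ub A) Sy).
  by case: Sy => v _ <-; exact: sqrtr_ge0.
have -> : S = set0 by apply/seteqP; split => // y Sy; exfalso; apply: S0; exists y.
by rewrite sup0.
Qed.

Lemma opnorm_elem (A : 'M[R]_d) v : norm2sq v = 1 -> Num.sqrt (norm2sq (A *m v)) <= opnorm A.
Proof. by move=> v1; apply: (ub_le_sup (opnorm_ub A)); exists v. Qed.

Lemma qf_le_opnorm (A : 'M[R]_d) g : qf g A g <= opnorm A * norm2sq g.
Proof.
have N0 := norm2sq_ge0 g.
case: (eqVneq (norm2sq g) 0) => [g0|gn0].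
  have -> : g = 0.
    apply/matrixP => i j; rewrite mxE (ord1 j).
    have : (g i 0) ^+ 2 <= norm2sq g.
      rewrite /norm2sq (bigD1 i) //= lerDl; apply: sumr_ge0 => k _; exact: sqr_ge0.
    by rewrite g0 => h; apply/eqP; rewrite -sqrf_eq0 eq_le h sqr_ge0.
  rewrite /qf trmx0 !mul0mx mxE; apply: mulr_ge0; [exact: opnorm_ge0 | exact: norm2sq_ge0].
have Np : 0 < norm2sq g by rewrite lt_def gn0 N0.
set s := Num.sqrt (norm2sq g).
have sp : 0 < s by rewrite sqrtr_gt0.
have ss : s ^+ 2 = norm2sq g by rewrite sqr_sqrtr.
set v := s^-1 *: g.
have v1 : norm2sq v = 1 by rewrite norm2sqZ exprVn ss mulVf.
have gv : g = s *: v by rewrite /v scalerA divff ?gt_eqF // scale1r.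
have hq : qf g A g = norm2sq g * qf v A v.
  by rewrite [in LHS]gv qfZl qfZr mulrA -expr2 ss.
rewrite hq [X in _ <= X]mulrC; apply: ler_wpM2l => //.
have e : qf v A v = dot v (A *m v) by rewrite /qf /dot mulmxA.
have cs := cauchy_schwarz v (A *m v); rewrite v1 mul1r in cs.
have h1 : dot v (A *m v) <= Num.sqrt (norm2sq (A *m v)).
  apply: (le_trans (ler_norm _)); rewrite -sqrtr_sqr ler_sqrt //; exact: norm2sq_ge0.
rewrite e; exact: (le_trans h1 (opnorm_elem A v1)).
Qed.

Lemma opnorm_le_tr (V : 'M[R]_d) : V^T = V -> opnorm V <= Num.sqrt (\tr (V *m V)).
Proof.
move=> Vs; rewrite /opnorm.
set S := [set _ | _ in _].
have [[y Sy]|S0] := pselect (exists y, S y).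
  apply: ge_sup; first by exists y.
  move=> _ [v /= v1 <-]; have h := elem_bound V v1; rewrite Vs in h.
  by rewrite ler_sqrt // (le_trans (norm2sq_ge0 _) h).
have -> : S = set0 by apply/seteqP; split => // z Sz; exfalso; apply: S0; exists z.
by rewrite sup0 sqrtr_ge0.
Qed.

Lemma PT_outer_le (P0 : 'M[R]_d) (g : 'cV[R]_d) (e : R) (Z : 'M[R]_d) :
  PT P0 -> 0 <= e -> (forall u, 0 <= qf u Z u) ->
  qf g Z g <= \tr ((P0 + g *m g^T + e%:M)^T *m Z).
Proof.
move=> hP he hZ.
rewrite !linearD /= !mulmxDl !mxtraceD tr_scalar_mx trmx_mul trmxK tr_outer.
have h1 := PT_tr hP hZ.
have h2 : 0 <= \tr (e%:M *m Z).
  by rewrite mul_scalar_mx mxtraceZ mulr_ge0 // -[Z]mul1mx PT1.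
lra.
Qed.

Lemma norm2sq0 : norm2sq (0 : 'cV[R]_d) = 0.
Proof. by rewrite /norm2sq big1 // => i _; rewrite mxE expr0n. Qed.

End Aux3.

Unset Implicit Arguments.

Theorem lemmaC4 (R : realType) (d : nat) (K : set 'M[R]_d)
  (eps beta eta : R) (T : nat) (f : 'cV[R]_d -> R)
  (d0 : measure_display) (Omega : measurableType d0) (P : probability Omega R)
  (ft : nat -> Omega -> 'cV[R]_d -> R) (Sigma : 'M[R]_d) (x0 : 'cV[R]_d)
  (x g : Omega -> nat -> 'cV[R]_d) (M V : Omega -> nat -> 'M[R]_d) :
  well_structured_K K ->
  0 < eps -> 0 < beta -> beta <= 1 -> 0 < eta -> (0 < T)%N ->
  C2 f -> (exists l, LamSet K f l) ->
  (forall t w x, (t < T)%N -> differentiable (ft t w) x) ->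
  psd Sigma ->
  {ae P, forall w, forall t x, (t < T)%N ->
      loewner (- Sigma) (grad f x *m (grad f x)^T - grad (ft t w) x *m (grad (ft t w) x)^T) /\
      loewner (grad f x *m (grad f x)^T - grad (ft t w) x *m (grad (ft t w) x)^T) Sigma} ->
  (forall w, weighted_adaptive K eps beta eta T (ft^~ w) x0 (x w) (g w) (M w) (V w)) ->
  let C := opnorm Sigma + norm2sq (grad f x0) + Lambda K f ^+ 2 * d%:R * eta ^+ 2 in
  {ae P, forall w,
      \sum_(t < T) norm2sq (g w t) <= 2 * C * T%:R ^+ 3 /\
      opnorm (V w T.-1) <= Num.sqrt (2 * C * T%:R ^+ 3 + eps * d%:R)}.
Proof.
move=> hK heps hb0 hb1 heta hT hC hne hdiff hSig hae hwa C.
apply: filterS hae => w hw.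
have [hx0 hstep] := hwa w.
have hPT : forall t, (t < T)%N -> PT (M w t).
  elim=> [|t IH] ht; have [_ -> _ _] := hstep _ ht.
    exact: PTD (@PT0 _ _) (PT_outer _).
  exact: PTD (PTZ (ltW hb0) (IH (ltnW ht))) (PT_outer _).
have hprev : forall t, (t < T)%N -> PT (if t is t'.+1 then beta *: M w t' else 0).
  by case=> [|t] ht /=; [exact: (@PT0 _ _) | exact: PTZ (ltW hb0) (hPT _ (ltnW ht))].
have hAT t : (t < T)%N -> PT (M w t + eps%:M)^T.
  move=> ht; apply: PT_tr; apply: PTD (hPT t ht) _.
  by rewrite -scalemx1; exact: PTZ (ltW heps) (@PT1 _ _).
have hstepB t : (t < T)%N -> norm2sq (invmx (V w t) *m g w t) <= d%:R.
  move=> ht; have [eg eM hPH ex] := hstep _ ht.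
  have h1 := opt1 hK hPH (hAT t ht).
  have [_ [pdV _]] := hPH; have [Vs _] := pdV.
  have Bs : (invmx (V w t))^T = invmx (V w t) by rewrite trmx_inv Vs.
  have hZ u : 0 <= qf u (invmx (V w t) *m invmx (V w t)) u.
    by rewrite -{1}Bs qf_TM norm2sq_ge0.
  have h2 := PT_outer_le (g w t) (hprev t ht) (ltW heps) hZ.
  rewrite -eM in h2.
  rewrite -{1}Bs qf_TM in h2.
  exact: le_trans h2 h1.
have hdisp t : (t <= T)%N -> norm2sq (x w t - x0) <= (t%:R) ^+ 2 * (eta ^+ 2 * d%:R).
  elim: t => [|t IH] ht.
    by rewrite hx0 subrr norm2sq0 expr0n /= mul0r.
  have ht' : (t < T)%N by [].
  have [_ _ _ ex] := hstep _ ht'.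
  have hb : norm2sq (- (eta *: (invmx (V w t) *m g w t))) <= eta ^+ 2 * d%:R.
    rewrite -scaleNr norm2sqZ sqrrN; apply: ler_wpM2l; first exact: sqr_ge0.
    exact: hstepB.
  have ha := IH (ltnW ht).
  rewrite ex addrAC.
  set a := x w t - x0 in ha *; set b := - _ in hb *.
  have e0 : 0 <= eta ^+ 2 * d%:R by rewrite mulr_ge0 ?sqr_ge0.
  clearbody a b.
  case: (posnP t) => [t0|tp].
    rewrite t0 expr0n /= mul0r in ha.
    have a0 : a = 0.
      apply/matrixP => i j; rewrite mxE (ord1 j).
      have : (a i 0) ^+ 2 <= norm2sq a.
        rewrite /norm2sq (bigD1 i) //= lerDl; apply: sumr_ge0 => k _; exact: sqr_ge0.
      move=> h; apply/eqP; rewrite -sqrf_eq0 eq_le sqr_ge0 andbT.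
      exact: le_trans h ha.
    by rewrite a0 add0r t0 expr1n mul1r.
  have tp' : (0 < t%:R :> R) by rewrite ltr0n.
  have := norm2sq_add a b tp' ltr01.
  rewrite mulr1 mul1r => hs.
  rewrite -(ler_pM2l tp').
  apply: le_trans hs _.
  have N0 := norm2sq_ge0 a; have N1 := norm2sq_ge0 b.
  rewrite -natr1.
  have h3 : (t%:R + 1) * norm2sq a <= (t%:R + 1) * (t%:R ^+ 2 * (eta ^+ 2 * d%:R)).
    by apply: ler_wpM2l => //; rewrite addr_ge0 // ltW.
  have h4 : t%:R * (t%:R + 1) * norm2sq b <= t%:R * (t%:R + 1) * (eta ^+ 2 * d%:R).
    by apply: ler_wpM2l => //; rewrite mulr_ge0 // ?addr_ge0 // ltW.
  set E := eta ^+ 2 * d%:R in h3 h4 *.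
  set tt := t%:R in h3 h4 *.
  have : (tt + 1) * (tt ^+ 2 * E) + tt * (tt + 1) * E = tt * ((tt + 1) ^+ 2 * E) by ring.
  lra.
have L0 := Lambda_ge0 hne.
have hgrad t : (t <= T)%N -> norm2sq (grad f (x w t)) <=
    2 * norm2sq (grad f x0) + 2 * (Lambda K f ^+ 2 * (t%:R ^+ 2 * (eta ^+ 2 * d%:R))).
  move=> ht.
  have := norm2sq_add (grad f x0) (grad f (x w t) - grad f x0) ltr01 ltr01.
  rewrite addrC subrK mulr1 (_ : 1 + 1 = 2 :> R) // mul1r.
  have hl := grad_lip_Lambda (x w t) x0 hC hne.
  have hl2 : Lambda K f ^+ 2 * norm2sq (x w t - x0) <= Lambda K f ^+ 2 * (t%:R ^+ 2 * (eta ^+ 2 * d%:R)).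
    by apply: ler_wpM2l; [exact: sqr_ge0 | exact: hdisp].
  lra.
have hg t : (t < T)%N -> norm2sq (g w t) <= opnorm Sigma + norm2sq (grad f (x w t)).
  move=> ht; have [eg _ _ _] := hstep _ ht.
  have [l1 _] := hw t (x w t) ht.
  rewrite -eg in l1.
  have := psd_qf (g w t) l1.
  set gf := grad f (x w t).
  rewrite !(qfBm, qfNm) (qf_outer _ (g w t) (g w t)) opprK -norm2sq_dot.
  have h1 : qf (g w t) (gf *m gf^T) (g w t) <= norm2sq gf * norm2sq (g w t).
    by have := psd_le_tr (g w t) (psd_outer gf); rewrite tr_outer1.
  have h2 := qf_le_opnorm Sigma (g w t).
  move=> h.
  have n0 := norm2sq_ge0 (g w t); have o0 := opnorm_ge0 Sigma; have n1 := norm2sq_ge0 gf.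
  set n := norm2sq (g w t) in h h1 h2 n0 *.
  set S0 := opnorm Sigma + norm2sq gf.
  have hS0 : 0 <= S0 by rewrite addr_ge0.
  have : n * n <= S0 * n by rewrite /S0; lra.
  nra.
have o0 := opnorm_ge0 Sigma.
have F0 := norm2sq_ge0 (grad f x0).
have E0 : 0 <= eta ^+ 2 * d%:R by rewrite mulr_ge0 ?sqr_ge0.
have L2 : 0 <= Lambda K f ^+ 2 by rewrite sqr_ge0.
have T1 : 1 <= T%:R :> R by rewrite ler1n.
have hsum : \sum_(t < T) norm2sq (g w t) <= 2 * C * T%:R ^+ 3.
  have each (t : 'I_T) : norm2sq (g w t) <= opnorm Sigma + (2 * norm2sq (grad f x0) +
      2 * (Lambda K f ^+ 2 * (T%:R ^+ 2 * (eta ^+ 2 * d%:R)))).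
    have h1 := hg t (ltn_ord t).
    have h2 := hgrad t (ltnW (ltn_ord t)).
    have tT : (t%:R ^+ 2 : R) <= T%:R ^+ 2.
      by rewrite lerXn2r ?nnegrE ?ler0n // ler_nat ltnW.
    have h3 : Lambda K f ^+ 2 * (t%:R ^+ 2 * (eta ^+ 2 * d%:R)) <=
        Lambda K f ^+ 2 * (T%:R ^+ 2 * (eta ^+ 2 * d%:R)).
      by apply: ler_wpM2l => //; apply: ler_wpM2r.
    lra.
  apply: le_trans (ler_sum _ (fun t _ => each t)) _.
  rewrite sumr_const card_ord -mulr_natr.
  have T3 : T%:R <= T%:R ^+ 3 :> R.
    exact: ler_eXnr.
  have h4 : opnorm Sigma * T%:R <= opnorm Sigma * T%:R ^+ 3 by apply: ler_wpM2l.
  have h5 : norm2sq (grad f x0) * T%:R <= norm2sq (grad f x0) * T%:R ^+ 3 by apply: ler_wpM2l.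
  rewrite /C; set TT := T%:R in T3 h4 h5 T1 *.
  have e3 : TT ^+ 3 = TT * TT ^+ 2 by rewrite exprS.
  rewrite e3 in h4 h5 *.
  nra.
split => //.
have tM t : (t < T)%N -> \tr (M w t) <= \sum_(k < t.+1) norm2sq (g w k).
  elim: t => [|t IH] ht; have [_ eM _ _] := hstep _ ht; rewrite eM /= mxtraceD tr_outer1.
    by rewrite mxtrace0 add0r big_ord1.
  rewrite mxtraceZ big_ord_recr /= lerD2r.
  have tr0 : 0 <= \tr (M w t).
    have := hPT t (ltnW ht) 1%:M; rewrite mulmx1; apply => u.
    by rewrite -norm2sqE norm2sq_ge0.
  apply: le_trans (IH (ltnW ht)).
  by rewrite -[X in _ <= X]mul1r ler_wpM2r.
have eT : T.-1.+1 = T by rewrite prednK.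
have hT1 : (T.-1 < T)%N by rewrite eT.
have h1 := tM T.-1 hT1; rewrite eT in h1.
have [_ _ hPH _] := hstep _ hT1.
have h2 := opt2 hK hPH (hAT _ hT1).
have [_ [[Vs _] _]] := hPH.
apply: le_trans (opnorm_le_tr Vs) _.
rewrite ler_sqrt; last first.
  have C0 : 0 <= C.
    rewrite /C; apply: addr_ge0; first exact: addr_ge0.
    by apply: mulr_ge0; [apply: mulr_ge0 | exact: sqr_ge0].
  apply: addr_ge0; first by rewrite !mulr_ge0 // exprn_ge0.
  by rewrite mulr_ge0 // ltW.
apply: le_trans h2 _.
rewrite mxtrace_tr mxtraceD mxtrace_scalar -mulr_natr.
lra.
Qed.
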